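(* Let $n\ge2$, let $\mathbb S^n\subset\mathbb R^{n+1}$ be the unit sphere and fix $p\in\mathbb S^n$. Let $a\in C^0([0,\infty))\cap C^\infty((0,\infty))$ satisfy $a(0)=0$, $a(t)=\dfrac{\sin(\log(\log(e/t)))}{1+\log(\log(e/t))}$ for $t\in(0,1]$, and $a(t)=0$ for $t\ge3/2$. Define $\phi:\mathbb S^n\to\mathbb R^{n+1}$ by $\phi(x)=\big(1+\tfrac12 a(|x-p|)\big)x$ and $Y=\phi(\mathbb S^n)$ (note $p\in Y$). If $k\geq 1$ and $f:\mathbb S^k\to Y$ is Lipschitz continuous (with respect to the Euclidean metric on $Y\subset\mathbb R^{n+1}$), then either $f(\mathbb S^k)=\{p\}$ or $p\notin f(\mathbb S^k)$. *)

(* Defs.v *)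
From HB Require Import structures.
From mathcomp Require Import all_boot all_order all_algebra.
From mathcomp Require Import all_classical all_reals all_analysis.
Set Implicit Arguments. Unset Strict Implicit. Unset Printing Implicit Defensive.
Import Order.TTheory GRing.Theory Num.Theory.
Local Open Scope ring_scope.

Definition enorm {R : realType} {m : nat} (x : 'rV[R]_m) : R :=
  Num.sqrt (\sum_(i < m) (x ord0 i) ^+ 2).

(* The unit sphere S^(m-1) in R^m (so S^n = unit_sphere (n.+1)). *)
Definition unit_sphere {R : realType} {m : nat} : set 'rV[R]_m :=
  [set x | enorm x = 1].

Definition smooth_pos {R : realType} (a : R -> R) : Prop :=
  forall (k : nat) (t : R), 0 < t -> derivable (derive1n k a) t 1.

Definition phi_map {R : realType} {m : nat} (a : R -> R) (p x : 'rV[R]_m)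
  : 'rV[R]_m := (1 + a (enorm (x - p)) / 2) *: x.

Definition euclid_lipschitz_on {R : realType} {m k : nat} (A : set 'rV[R]_k)
  (f : 'rV[R]_k -> 'rV[R]_m) : Prop :=
  exists L : R, forall x y, A x -> A y -> enorm (f x - f y) <= L * enorm (x - y).

(* Main.v *)
Require Import Defs.
From HB Require Import structures.
From mathcomp Require Import all_boot all_order all_algebra.
From mathcomp Require Import all_classical all_reals all_analysis.
From mathcomp Require Import ring lra.
Import Order.TTheory GRing.Theory Num.Theory numFieldNormedType.Exports.
Local Open Scope classical_set_scope.
Local Open Scope ring_scope.
Section Vec.
Variable R : realType.
Variable m : nat.
Implicit Types x y z : 'rV[R]_m.

Definition dot x y : R := \sum_(i < m) x ord0 i * y ord0 i.

Lemma dotC x y : dot x y = dot y x.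
Proof. by apply: eq_bigr => i _; rewrite mulrC. Qed.

Lemma dot_ge0 x : 0 <= dot x x.
Proof. by apply: sumr_ge0 => i _; rewrite -expr2 sqr_ge0. Qed.

Lemma enorm_sq x : enorm x ^+ 2 = dot x x.
Proof.
rewrite /enorm sqr_sqrtr //; apply: sumr_ge0 => i _; exact: sqr_ge0.
Qed.

Lemma enorm_ge0 x : 0 <= enorm x.
Proof. exact: sqrtr_ge0. Qed.

Lemma dot_lin z (a b : R) x y :
  (forall i, z ord0 i = a * x ord0 i + b * y ord0 i) ->
  dot z z = a ^+ 2 * dot x x + 2 * a * b * dot x y + b ^+ 2 * dot y y.
Proof.
move=> hz; rewrite /dot !mulr_sumr -!big_split /=.
by apply: eq_bigr => i _; rewrite hz; ring.
Qed.

Lemma CS x y : dot x y ^+ 2 <= dot x x * dot y y.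
Proof.
have [Y0|Ypos] := eqVneq (dot y y) 0.
  have y0 : forall i, y ord0 i = 0.
    move=> i; move/eqP: Y0; rewrite psumr_eq0; last by move=> j _; rewrite -expr2 sqr_ge0.
    move=> /allP /(_ i (mem_index_enum _)) /=; rewrite mulf_eq0 orbb => /eqP //.
  have -> : dot x y = 0 by rewrite /dot big1 // => i _; rewrite y0 mulr0.
  by rewrite Y0 expr0n /= mulr0.
set X := dot x x; set Y := dot y y; set P := dot x y.
have hY : 0 < Y by rewrite lt_def Ypos dot_ge0.
pose z : 'rV[R]_m := Y *: x - P *: y.
have := dot_ge0 z.
rewrite (@dot_lin z Y (- P) x y); last by move=> i; rewrite !mxE; ring.
rewrite -/X -/Y -/P => h.
have h2 : 0 <= Y * (X * Y - P ^+ 2) by rewrite mulrBr; lra.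
rewrite pmulr_rge0 // subr_ge0 in h2; exact: h2.
Qed.

Lemma dot_le x y : dot x y <= enorm x * enorm y.
Proof.
have hx := enorm_ge0 x; have hy := enorm_ge0 y.
have := CS x y; rewrite -!enorm_sq => h.
have : dot x y ^+ 2 <= (enorm x * enorm y) ^+ 2 by rewrite exprMn.
move=> h'; have hm : 0 <= enorm x * enorm y by rewrite mulr_ge0.
case: (lerP (dot x y) 0) => hd; first exact: le_trans hd hm.
by rewrite -(ler_pXn2r (n:=2)) // ?nnegrE ?ltW.
Qed.

Lemma enorm_lin z (a b : R) x y :
  (forall i, z ord0 i = a * x ord0 i + b * y ord0 i) ->
  enorm z ^+ 2 = a ^+ 2 * enorm x ^+ 2 + 2 * a * b * dot x y + b ^+ 2 * enorm y ^+ 2.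
Proof. by move=> hz; rewrite !enorm_sq (dot_lin _ _ _ _ _ hz). Qed.

Lemma sq_le_sq (u v : R) : 0 <= u -> 0 <= v -> u ^+ 2 <= v ^+ 2 -> u <= v.
Proof. by move=> hu hv; rewrite ler_pXn2r // ?nnegrE. Qed.

Lemma enormD x y : enorm (x + y) <= enorm x + enorm y.
Proof.
apply: sq_le_sq; rewrite ?addr_ge0 ?enorm_ge0 //.
rewrite (@enorm_lin (x + y) 1 1 x y); last by move=> i; rewrite !mxE; ring.
have := dot_le x y; nra.
Qed.

Lemma enormZ (c : R) x : enorm (c *: x) = `|c| * enorm x.
Proof.
apply/eqP; rewrite eq_le; apply/andP; split; apply: sq_le_sq;
  rewrite ?mulr_ge0 ?enorm_ge0 ?normr_ge0 //;
  rewrite (@enorm_lin (c *: x) c 0 x x) ?exprMn ?real_normK ?num_real //;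
  try (by move=> i; rewrite !mxE; ring); lra.
Qed.

Lemma enormN x : enorm (- x) = enorm x.
Proof. by rewrite -scaleN1r enormZ normrN normr1 mul1r. Qed.

Lemma enormB x y : enorm (x - y) <= enorm x + enorm y.
Proof. by rewrite -(enormN y) enormD. Qed.

Lemma enormBC x y : enorm (x - y) = enorm (y - x).
Proof. by rewrite -enormN opprB. Qed.

Lemma enorm_rev x y : `|enorm x - enorm y| <= enorm (x - y).
Proof.
rewrite ler_norml; apply/andP; split.
  have := enormD (y - x) x; rewrite subrK enormBC; lra.
have := enormD (x - y) y; rewrite subrK; lra.
Qed.

Lemma enorm0 : enorm (0 : 'rV[R]_m) = 0.
Proof. by rewrite -(scale0r (0 : 'rV[R]_m)) enormZ normr0 mul0r. Qed.

Lemma enorm_eq0 x : enorm x = 0 -> x = 0.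
Proof.
move=> h; have : dot x x = 0 by rewrite -enorm_sq h expr0n.
move/eqP; rewrite psumr_eq0; last by move=> j _; rewrite -expr2 sqr_ge0.
move=> /allP H; apply/rowP => i; rewrite mxE.
by have := H i (mem_index_enum _); rewrite /= mulf_eq0 orbb => /eqP.
Qed.

Lemma normalize_lip x y (c : R) : 0 < c -> c <= enorm x -> c <= enorm y ->
  enorm ((enorm x)^-1 *: x - (enorm y)^-1 *: y) <= 2 / c * enorm (x - y).
Proof.
move=> hc hx hy.
have nx : 0 < enorm x by apply: lt_le_trans hc hx.
have ny : 0 < enorm y by apply: lt_le_trans hc hy.
have -> : (enorm x)^-1 *: x - (enorm y)^-1 *: y =
   (enorm x)^-1 *: (x - y) + ((enorm x)^-1 - (enorm y)^-1) *: y.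
  by rewrite scalerBr scalerBl addrA subrK.
apply: le_trans (enormD _ _) _; rewrite !enormZ.
set X := enorm x; set Y := enorm y; set D := enorm (x - y).
have hD : `|Y - X| <= D by rewrite distrC; apply: enorm_rev.
have e1 : X^-1 - Y^-1 = (Y - X) / X * Y^-1 by field; rewrite ?gt_eqF.
have iX : 0 < X^-1 by rewrite invr_gt0.
have iY : 0 < Y^-1 by rewrite invr_gt0.
rewrite e1 !normrM (ger0_norm (ltW iX)) (ger0_norm (ltW iY)).
rewrite divfK ?gt_eqF // (mulrC `|Y - X|) -mulrDr.
apply: (@le_trans _ _ (X^-1 * (2 * D))).
  apply: ler_wpM2l; first by rewrite invr_ge0 ltW.
  lra.
rewrite mulrA (mulrC X^-1) -[2 / c]/(2 * c^-1); apply: ler_wpM2r; first by rewrite enorm_ge0.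
apply: ler_wpM2l => //; by rewrite lef_pV2.
Qed.
End Vec.
Arguments dot {R m}.
Arguments dotC {R m}.
Arguments dot_ge0 {R m}.
Arguments enorm_sq {R m}.
Arguments enorm_ge0 {R m}.
Arguments dot_le {R m}.
Arguments enorm_lin {R m}.
Arguments enormD {R m}.
Arguments enormZ {R m}.
Arguments enormN {R m}.
Arguments enormB {R m}.
Arguments enormBC {R m}.
Arguments enorm_rev {R m}.
Arguments enorm0 {R m}.
Arguments enorm_eq0 {R m}.
Arguments normalize_lip {R m}.
Section Levels.
Variable R : realType.

Definition theta (j : nat) : R := pi / 2 + j%:R * pi.
Definition tau (j : nat) : R := expR 1 / expR (expR (theta j)).

Lemma theta_ge0 j : 0 <= theta j.
Proof. by rewrite /theta addr_ge0 ?mulr_ge0 ?divr_ge0 ?pi_ge0. Qed.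

Lemma thetaS j : theta j.+1 = theta j + pi.
Proof. by rewrite /theta -(natr1 (R:=R) j); ring. Qed.

Lemma sin_theta j : sin (theta j) = (-1) ^+ j.
Proof.
elim: j => [|j IH]; first by rewrite /theta mul0r addr0 sin_pihalf expr0.
by rewrite thetaS sinDpi IH exprS mulN1r.
Qed.

Lemma tau_gt0 j : 0 < tau j.
Proof. by rewrite /tau divr_gt0 ?expR_gt0. Qed.

Lemma tau_le1 j : tau j <= 1.
Proof.
rewrite /tau ler_pdivrMr ?expR_gt0 // mul1r ler_expR.
by rewrite -expR0 ler_expR theta_ge0.
Qed.

Lemma tau_decr j : tau j.+1 < tau j.
Proof.
rewrite /tau ltr_pM2l ?expR_gt0 // ltf_pV2 ?posrE ?expR_gt0 // ltr_expR ltr_expR.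
by rewrite thetaS ltrDl pi_gt0.
Qed.

Lemma tau_decr_le i j : (i <= j)%N -> tau j <= tau i.
Proof.
move/subnK <-; elim: (j - i)%N => [|d IH]; first by rewrite add0n.
by rewrite addSn (le_trans (ltW (tau_decr _))).
Qed.

Lemma tau_small (e : R) : 0 < e -> exists j, tau j < e.
Proof.
move=> he.
have h0 : 0 <= expR 1 / e by rewrite divr_ge0 ?expR_ge0 ?ltW.
exists (Num.Def.archi_bound (expR 1 / e)).
set N := Num.Def.archi_bound _.
have hN := archi_boundP h0; rewrite -/N in hN.
rewrite /tau ltr_pdivrMr ?expR_gt0 // -ltr_pdivrMl //.
rewrite mulrC; apply: (lt_le_trans hN).
have hpi : 1 <= pi :> R by have := pi_ge2 R; lra.
have h1 : N%:R <= theta N.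
  rewrite /theta; have : N%:R <= N%:R * pi :> R by rewrite ler_peMr.
  have := pi_gt0 R; have : 0 < pi / 2 :> R by rewrite divr_gt0 ?pi_gt0.
  lra.
apply: (le_trans h1); apply: (le_trans _ (expR_ge1Dx _)).
have := expR_ge1Dx (theta N); lra.
Qed.

End Levels.
Arguments theta {R}.
Arguments tau {R}.
Section Harm.
Variable R : realType.

Lemma harm_half (n : nat) : (0 < n)%N ->
  2^-1 <= \sum_(n <= i < n.*2) (i.+1%:R : R)^-1.
Proof.
case: n => // n _.
rewrite (@le_trans _ _ (\sum_(n.+1 <= i < n.+1.*2) (n.+1.*2%:R : R)^-1)) //=.
  rewrite sumr_const_nat -addnn addnK addnn -mul2n natrM invfM.
  by rewrite -[_ *+ n.+1]mulr_natr divfK.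
apply: ler_sum_nat => i /andP[? ?]; rewrite lef_pV2 ?qualifE/= ?ler_nat //.
Qed.

Lemma harm_big (n m : nat) : (0 < n)%N ->
  m%:R / 2 <= \sum_(n <= i < (2 ^ m * n)%N) (i.+1%:R : R)^-1.
Proof.
move=> hn; elim: m => [|m IH]; first by rewrite mul0r expn0 mul1n big_geq.
rewrite (@big_cat_nat _ _ _ (2 ^ m * n)%N) //=; last first.
  by rewrite expnS -mulnA leq_pmull // muln_gt0 expn_gt0.
  by rewrite leq_pmull // expn_gt0.
have h2 : (0 < 2 ^ m * n)%N by rewrite muln_gt0 expn_gt0 hn.
have := @harm_half (2 ^ m * n)%N h2.
rewrite -mul2n mulnA -expnS => h.
rewrite -natr1 mulrDl; lra.
Qed.

Lemma harm_unbounded (n : nat) (M : R) : (0 < n)%N ->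
  exists J, (n <= J)%N /\ M < \sum_(n <= i < J) (i.+1%:R : R)^-1.
Proof.
move=> hn.
have h0 : 0 <= `|M| * 2 by rewrite mulr_ge0 ?normr_ge0.
set m := Num.Def.archi_bound (`|M| * 2).
have hm := archi_boundP h0.
exists (2 ^ m * n)%N; split; first by rewrite leq_pmull // expn_gt0.
apply: lt_le_trans (harm_big n m hn).
rewrite ltr_pdivlMr //; apply: le_lt_trans hm.
by rewrite ler_pM2r // real_ler_norm ?num_real.
Qed.

Lemma core (s g : nat -> R) (n : nat) (M c : R) : (0 < n)%N -> 0 < c -> 0 <= M ->
  (forall j, (n <= j)%N -> 0 <= s j <= 1) ->
  (forall j, (n <= j)%N -> `|g j - g j.+1| <= M * (s j - s j.+1)) ->
  (forall j, (n <= j)%N -> c / j.+1%:R <= `|g j - g j.+1|) -> False.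
Proof.
move=> hn hc hM hs hlip hgap.
have [J [hnJ hJ]] := harm_unbounded n (M / c) hn.
have : c * \sum_(n <= i < J) (i.+1%:R : R)^-1 <= M * (s n - s J).
  have -> : s n - s J = \sum_(n <= i < J) (s i - s i.+1).
    rewrite -opprB -telescope_sumr // -sumrN; apply: eq_bigr => i _; by rewrite opprB.
  rewrite !mulr_sumr; apply: ler_sum_nat => i /andP [hi _].
  exact: le_trans (hgap i hi) (hlip i hi).
have := hs n (leqnn n); have := hs J hnJ.
rewrite ltr_pdivrMr // in hJ.
move=> hsJ hsn h.
have : M * (s n - s J) <= M * 1 by rewrite ler_wpM2l //; lra.
move: hJ h; rewrite mulrC; lra.
Qed.
End Harm.
Section Hit.
Variable R : realType.

Lemma first_hit (g : R -> R) (b K v : R) : 0 <= b -> 0 <= K ->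
  (forall s s', 0 <= s <= b -> 0 <= s' <= b -> `|g s - g s'| <= K * `|s - s'|) ->
  g 0 < v -> v <= g b ->
  exists s, [/\ 0 <= s <= b, g s = v & forall s', 0 <= s' < s -> g s' < v].
Proof.
move=> hb hK hlip h0 hbv.
pose A := [set s : R | (0 <= s <= b) /\ forall s', 0 <= s' <= s -> g s' < v].
have A0 : A 0.
  split; first by rewrite lexx hb.
  by move=> s' hs'; have -> : s' = 0 by apply/eqP; rewrite eq_le andbC.
have ubA : ubound A b by move=> x [/andP [_ ?] _].
have hsA : has_sup A by split; [exists 0 | exists b].
set S := sup A.
have S0 : 0 <= S by apply: sup_upper_bound.
have Sb : S <= b by apply: ge_sup => //; exists 0.
have hbelow : forall s', 0 <= s' < S -> g s' < v.
  move=> s' /andP [h1 h2].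
  have hpos : 0 < S - s' by rewrite subr_gt0.
  have [e [_ he] hSe] := sup_adherent hpos hsA.
  by apply: he; rewrite h1 /=; move: hSe; rewrite opprB addrCA subrr addr0 => /ltW.
have lipS : forall s, 0 <= s <= b -> g s <= g S + K * `|s - S|.
  move=> s hs; have := hlip s S hs; rewrite S0 Sb => /(_ isT).
  by rewrite ler_norml => /andP [_ h]; lra.
exists S; split => //; first by rewrite S0 Sb.
apply/eqP; rewrite eq_le; apply/andP; split.
  rewrite leNgt; apply/negP => hv.
  have heps : 0 < (g S - v) / (K + 1) by rewrite divr_gt0 // ?subr_gt0 //; lra.
  have [e [/andP [e0 eb] he] hSe] := sup_adherent heps hsA.
  have eS : e <= S by apply: sup_upper_bound => //; split => //; rewrite e0.
  have := he e; rewrite e0 lexx => /(_ isT) hge.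
  have := hlip S e; rewrite S0 Sb e0 eb => /(_ isT isT).
  rewrite [`|S - e|]ger0_norm ?subr_ge0 // ler_norml => /andP [_ h1].
  have : K * (S - e) <= K * ((g S - v) / (K + 1)).
    by apply: ler_wpM2l => //; move: hSe; rewrite -/S; lra.
  have : K * ((g S - v) / (K + 1)) < g S - v.
    rewrite mulrA ltr_pdivrMr; last lra.
    rewrite mulrC ltr_pM2l; [lra | lra].
  lra.
rewrite leNgt; apply/negP => hv.
have Sltb : S < b.
  rewrite lt_neqAle Sb andbT; apply/negP => /eqP hSb; move: hv; rewrite hSb; lra.
pose d := Num.min ((v - g S) / (K + 1)) (b - S).
have d0 : 0 < d by rewrite lt_min divr_gt0 ?subr_gt0 //; lra.
have d1 : d <= (v - g S) / (K + 1) by rewrite ge_min lexx.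
have d2 : d <= b - S by rewrite ge_min lexx orbT.
have Kd : K * d < v - g S.
  apply: (le_lt_trans (y := K * ((v - g S) / (K + 1)))); first by rewrite ler_wpM2l.
  rewrite mulrA ltr_pdivrMr; last lra.
  rewrite mulrC ltr_pM2l; [lra | by rewrite subr_gt0].
have : A (S + d).
  split; first by apply/andP; split; lra.
  move=> s' /andP [s'0 s'd].
  case: (ltrP s' S) => hs'; first by apply: hbelow; rewrite s'0.
  have := lipS s'; rewrite s'0 /= => /(_ ltac:(lra)).
  rewrite [`|s' - S|]ger0_norm ?subr_ge0 // => h.
  have : K * (s' - S) <= K * d by apply: ler_wpM2l => //; lra.
  lra.
move/(sup_upper_bound hsA); rewrite -/S; lra.
Qed.
End Hit.
Section NearP.
Variable R : realType.
Variable a : R -> R.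
Hypothesis ha0 : a 0 = 0.
Hypothesis ha : forall t : R, 0 < t <= 1 ->
     a t = sin (ln (ln (expR 1 / t))) / (1 + ln (ln (expR 1 / t))).
Hypothesis ha32 : forall t : R, 3 / 2 <= t -> a t = 0.

Lemma a_le1 t : 0 <= t <= 1 -> `|a t| <= 1.
Proof.
move=> /andP [t0 t1].
have [->|tn0] := eqVneq t 0; first by rewrite ha0 normr0.
have tp : 0 < t by rewrite lt_def tn0 t0.
rewrite ha ?tp ?t1 //.
set u := ln (ln (expR 1 / t)).
have h1 : 1 <= ln (expR 1 / t).
  have : ln (expR 1) <= ln (expR 1 / t).
    rewrite ler_ln ?posrE ?divr_gt0 ?expR_gt0 //.
    rewrite ler_pdivlMr //; have := expR_gt0 (1:R); nra.
  by rewrite expRK.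
have u0 : 0 <= u by apply: ln_ge0.
rewrite normrM normfV (ger0_norm (x := 1 + u)); last lra.
rewrite ler_pdivrMr; last lra.
have := sin_max u; lra.
Qed.

Lemma near_p (m : nat) (p y : 'rV[R]_m) :
  enorm p = 1 -> enorm y = 1 ->
  enorm (phi_map a p y - p) < 1/2 ->
  [/\ enorm (phi_map a p y) = 1 + a (enorm (y - p)) / 2,
      1/2 <= enorm (phi_map a p y),
      (enorm (phi_map a p y))^-1 *: phi_map a p y = y &
      enorm (y - p) < 1].
Proof.
move=> hp hy hz.
set t := enorm (y - p).
set c := 1 + a t / 2.
have t0 : 0 <= t by apply: enorm_ge0.
set d := dot y p.
have ht : t ^+ 2 = 2 - 2 * d.
  rewrite /t (@enorm_lin _ _ (y - p) 1 (-1) y p); last by move=> i; rewrite !mxE; ring.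
  rewrite hy hp /d; ring.
have hzc : enorm (phi_map a p y - p) ^+ 2 = c ^+ 2 - 2 * c * d + 1.
  rewrite (@enorm_lin _ _ (phi_map a p y - p) c (-1) y p); last first.
    by move=> i; rewrite /phi_map !mxE -/t -/c; ring.
  rewrite hy hp /d; ring.
have hz2 : enorm (phi_map a p y - p) ^+ 2 < 1/4.
  have := enorm_ge0 (phi_map a p y - p); move: hz; set e := enorm _ => h1 h2.
  have : e * e < 1/2 * (1/2) by apply: ltr_pM => //.
  rewrite expr2; lra.
have tlt1 : t < 1.
  case: (lerP (3/2) t) => ht32.
    exfalso; have hc : c = 1 by rewrite /c ha32 // mul0r addr0.
    move: hz; rewrite /phi_map -/t -/c hc scale1r -/t; lra.
  have ht2 : t ^+ 2 < 9/4.
    have : t * t < 3/2 * (3/2) by apply: ltr_pM => //.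
    rewrite expr2; lra.
  rewrite hzc in hz2.
  have hd2 : 3/4 < d ^+ 2 by have := sqr_ge0 (c - d); rewrite sqrrB; lra.
  have hd : 1/2 < d by nra.
  have : t ^+ 2 < 1 by lra.
  by rewrite expr_lt1.
have hc1 : `|a t| <= 1 by apply: a_le1; rewrite t0 ltW.
have cpos : 1/2 <= c by rewrite /c; move: hc1; rewrite ler_norml; lra.
have hnz : enorm (phi_map a p y) = c.
  by rewrite /phi_map -/t -/c enormZ hy mulr1 ger0_norm //; lra.
split => //; first by rewrite hnz.
rewrite hnz /phi_map -/t -/c scalerA mulVf ?scale1r //.
by apply/eqP => h; move: cpos; rewrite h; lra.
Qed.
End NearP.
Section Gap.
Variable R : realType.
Variable a : R -> R.
Hypothesis ha : forall t : R, 0 < t <= 1 ->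
     a t = sin (ln (ln (expR 1 / t))) / (1 + ln (ln (expR 1 / t))).

Lemma a_tau j : a (tau j) = (-1) ^+ j / (1 + theta j).
Proof.
rewrite ha ?tau_gt0 ?tau_le1 //.
have -> : expR 1 / tau j = expR (expR (@theta R j)).
  rewrite /tau; have h1 := expR_gt0 (1:R); have h2 := expR_gt0 (expR (@theta R j)).
  by field; rewrite ?gt_eqF.
by rewrite !expRK sin_theta.
Qed.

Lemma gap j : (2 * (1 + pi))^-1 / j.+1%:R <=
  `|(1 + a (tau j) / 2) - (1 + a (tau j.+1) / 2)|.
Proof.
rewrite !a_tau exprS mulN1r.
set A := 1 + theta j; set B := 1 + theta j.+1.
have hA : 0 < A by rewrite /A; have := theta_ge0 R j; lra.
have hB : 0 < B by rewrite /B; have := theta_ge0 R j.+1; lra.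
have -> : 1 + (-1) ^+ j / A / 2 - (1 + - (-1) ^+ j / B / 2) =
   (-1) ^+ j * ((A^-1 + B^-1) / 2) by ring.
rewrite normrM normrX normrN1 expr1n mul1r.
have iA : 0 < A^-1 by rewrite invr_gt0.
have iB : 0 < B^-1 by rewrite invr_gt0.
rewrite ger0_norm; last by apply: divr_ge0 => //; lra.
have hpi := pi_ge2 R.
have hAle : A <= (1 + pi) * j.+1%:R.
  rewrite /A /theta -(natr1 (R:=R) j).
  have : 0 <= j%:R :> R by [].
  have : 0 <= j%:R * pi :> R by rewrite mulr_ge0 // ltW // pi_gt0.
  lra.
have h1 : ((1 + pi) * j.+1%:R)^-1 <= A^-1 by rewrite lef_pV2 // posrE mulr_gt0 //; lra.
have -> : (2 * (1 + pi))^-1 / j.+1%:R = ((1 + pi) * j.+1%:R)^-1 / 2 :> R.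
  by field; apply/andP; split; rewrite ?pnatr_eq0 //; lra.
rewrite ler_pM2r ?invr_gt0 //; apply: le_trans h1 _; rewrite lerDl ltW //.
Qed.
End Gap.
Lemma pathB (R : realType) (n k : nat) (p : 'rV[R]_n) (a : R -> R)
  (f : 'rV[R]_k -> 'rV[R]_n) :
  enorm p = 1 -> a 0 = 0 ->
  (forall t : R, 0 < t <= 1 ->
     a t = sin (ln (ln (expR 1 / t))) / (1 + ln (ln (expR 1 / t)))) ->
  (forall t : R, 3 / 2 <= t -> a t = 0) ->
  (forall x, enorm x = 1 -> exists2 y, enorm y = 1 & f x = phi_map a p y) ->
  forall L : R, (forall x y, enorm x = 1 -> enorm y = 1 ->
     enorm (f x - f y) <= L * enorm (x - y)) ->
  forall x0 x1, enorm x0 = 1 -> enorm x1 = 1 -> x0 + x1 != 0 ->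
  f x0 = p -> f x1 != p -> False.
Proof.
move=> hp ha0 ha ha32 hf L hL x0 x1 hx0 hx1 hsum fx0 fx1.
set d01 := dot x0 x1.
have hd1 : d01 <= 1 by have := dot_le x0 x1; rewrite hx0 hx1 mulr1.
have hd0 : 0 < 1 + d01.
  have h := @enorm_lin _ _ (x0 + x1) 1 1 x0 x1 ltac:(by move=> i; rewrite !mxE; ring).
  rewrite hx0 hx1 in h.
  have hne : enorm (x0 + x1) != 0 by apply/eqP => /enorm_eq0 /eqP; apply/negP.
  have : 0 < enorm (x0 + x1) ^+ 2 by rewrite exprn_gt0 // lt_def hne enorm_ge0.
  rewrite h -/d01; lra.
pose u (s : R) := (1 - s) *: x0 + s *: x1.
have hu2 : forall s, enorm (u s) ^+ 2 = (1 - s) ^+ 2 + 2 * (1 - s) * s * d01 + s ^+ 2.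
  move=> s; rewrite (@enorm_lin _ _ (u s) (1 - s) s x0 x1); last by move=> i; rewrite !mxE.
  by rewrite hx0 hx1 -/d01; ring.
set m0 := Num.sqrt ((1 + d01) / 2).
have m0p : 0 < m0 by rewrite sqrtr_gt0; lra.
have hum : forall s, 0 <= s <= 1 -> m0 <= enorm (u s).
  move=> s /andP [s0 s1]; apply: sq_le_sq; [exact: ltW | exact: enorm_ge0 |].
  rewrite hu2 sqr_sqrtr; last lra.
  have : 0 <= (1 - d01) * (1 - 2 * s) ^+ 2 by rewrite mulr_ge0 ?sqr_ge0 //; lra.
  move=> h; have e : (1 - d01) * (1 - 2 * s) ^+ 2 = 2 * ((1 - s) ^+ 2 + 2 * (1 - s) * s * d01 + s ^+ 2 - (1 + d01) / 2) by field.
  rewrite e in h; lra.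
pose g (s : R) := (enorm (u s))^-1 *: u s.
have hg1 : forall s, 0 <= s <= 1 -> enorm (g s) = 1.
  move=> s hs; have := hum s hs => h; have hpos : 0 < enorm (u s) by lra.
  by rewrite enormZ ger0_norm ?invr_ge0 ?ltW // mulVf // gt_eqF.
have hu0 : u 0 = x0 by rewrite /u subr0 scale1r scale0r addr0.
have hu1 : u 1 = x1 by rewrite /u subrr scale0r scale1r add0r.
have hg0 : g 0 = x0 by rewrite /g hu0 hx0 invr1 scale1r.
have hg1' : g 1 = x1 by rewrite /g hu1 hx1 invr1 scale1r.
set Kg := 2 / m0 * 2.
have Kg0 : 0 <= Kg by rewrite /Kg mulr_ge0 // divr_ge0 // ltW.
have hglip : forall s s', 0 <= s <= 1 -> 0 <= s' <= 1 ->
    enorm (g s - g s') <= Kg * `|s - s'|.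
  move=> s s' hs hs'.
  apply: le_trans (normalize_lip (u s) (u s') m0 m0p (hum s hs) (hum s' hs')) _.
  have -> : u s - u s' = (s - s') *: (x1 - x0).
    by apply/rowP => i; rewrite /u !mxE; ring.
  rewrite enormZ /Kg.
  have -> : 2 / m0 * 2 * `|s - s'| = 2 / m0 * (`|s - s'| * 2) by ring.
  apply: ler_wpM2l; first by rewrite divr_ge0 // ltW.
  apply: ler_wpM2l; first exact: normr_ge0.
  by have := enormB x1 x0; rewrite hx0 hx1; lra.
pose F (s : R) := f (g s).
set M := `|L| * Kg.
have M0 : 0 <= M by rewrite mulr_ge0.
have hFlip : forall s s', 0 <= s <= 1 -> 0 <= s' <= 1 ->
    enorm (F s - F s') <= M * `|s - s'|.
  move=> s s' hs hs'.
  apply: le_trans (hL _ _ (hg1 s hs) (hg1 s' hs')) _.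
  apply: (le_trans (y := `|L| * enorm (g s - g s'))).
    by apply: ler_wpM2r; [exact: enorm_ge0 | exact: ler_norm].
  by rewrite /M -mulrA; apply: ler_wpM2l; [exact: normr_ge0 | exact: hglip].
pose D (s : R) := enorm (F s - p).
have hDlip : forall s s', 0 <= s <= 1 -> 0 <= s' <= 1 ->
    `|D s - D s'| <= M * `|s - s'|.
  move=> s s' hs hs'; apply: le_trans (enorm_rev _ _) _.
  by rewrite opprB addrA subrK; apply: hFlip.
have D0 : D 0 = 0 by rewrite /D /F hg0 fx0 subrr enorm0.
have D1 : 0 < D 1.
  rewrite /D /F hg1' lt_def enorm_ge0 andbT.
  by apply/eqP => /enorm_eq0 /eqP; rewrite subr_eq0; apply/negP.
set rho := Num.min (D 1) (1/4).
have rho0 : 0 < rho by rewrite lt_min D1 /=; lra.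
have rho4 : rho <= 1/4 by rewrite ge_min lexx orbT.
have [s1 [hs1 Ds1 hbef]] : exists s, [/\ 0 <= s <= 1, D s = rho &
    forall s', 0 <= s' < s -> D s' < rho].
  apply: (@first_hit R D 1 M rho) => //; first by rewrite D0.
  by rewrite ge_min lexx.
have hs1' : forall s, 0 <= s <= s1 -> 0 <= s <= 1.
  by move=> s /andP [h1 h2]; rewrite h1 /=; move: hs1 => /andP [_ h3]; lra.
have hDle : forall s, 0 <= s <= s1 -> D s <= rho.
  move=> s /andP [h1 h2]; case: (ltrP s s1) => h3.
    by apply: ltW; apply: hbef; rewrite h1.
  have -> : s = s1 by apply/eqP; rewrite eq_le h2 h3.
  by rewrite Ds1.
pose T (s : R) := enorm ((enorm (F s))^-1 *: F s - p).
pose E (s : R) := enorm (F s).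
have hnear : forall s, 0 <= s <= s1 ->
    [/\ E s = 1 + a (T s) / 2, 1/2 <= E s & (F s != p -> 0 < T s)].
  move=> s hs.
  have [y hy hFy] := hf (g s) (hg1 s (hs1' s hs)).
  have hz : enorm (phi_map a p y - p) < 1/2.
    by rewrite -hFy; have := hDle s hs; rewrite /D /F; lra.
  have [e1 e2 e3 e4] := @near_p R a ha0 ha ha32 _ p y hp hy hz.
  have hT : T s = enorm (y - p) by rewrite /T /F hFy e3.
  split.
  - by rewrite /E /F hFy e1 hT.
  - by rewrite /E /F hFy.
  - move=> hne; rewrite hT lt_def enorm_ge0 andbT; apply/eqP => /enorm_eq0 /eqP.
    rewrite subr_eq0 => /eqP hyp; move/eqP: hne; apply.
    by rewrite /F hFy hyp /phi_map subrr enorm0 ha0 mul0r addr0 scale1r.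
have T0 : T 0 = 0 by rewrite /T /F hg0 fx0 hp invr1 scale1r subrr enorm0.
have Ts1 : 0 < T s1.
  have := hnear s1; rewrite lexx; move: hs1 => /andP [-> _] => /(_ isT) [_ _]; apply.
  apply/eqP => h; move: Ds1; rewrite /D h subrr enorm0; lra.
have hTlip : forall s s', 0 <= s <= s1 -> 0 <= s' <= s1 ->
    `|T s - T s'| <= (4 * M) * `|s - s'|.
  move=> s s' hs hs'.
  have [_ h1 _] := hnear s hs; have [_ h2 _] := hnear s' hs'.
  apply: le_trans (enorm_rev _ _) _.
  rewrite opprB addrA subrK.
  apply: le_trans (normalize_lip (F s) (F s') (1/2) _ h1 h2) _; first lra.
  have -> : 2 / (1/2) = 4 :> R by field.
  by rewrite -mulrA; apply: ler_wpM2l => //; apply: hFlip; apply: hs1'.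
have hElip : forall s s', 0 <= s <= s1 -> 0 <= s' <= s1 ->
    `|E s - E s'| <= M * `|s - s'|.
  move=> s s' hs hs'; apply: le_trans (enorm_rev _ _) _.
  by apply: hFlip; apply: hs1'.
have [j0 hj0] := @tau_small R (T s1) Ts1.
pose n0 := j0.+1.
have hex : forall j, exists s, (n0 <= j)%N ->
    [/\ 0 <= s <= s1, T s = tau j & forall s', 0 <= s' < s -> T s' < tau j].
  move=> j; case: (leqP n0 j) => hj; last by exists 0.
  have hs10 : 0 <= s1 by move: hs1 => /andP [].
  have [s hs] := @first_hit R T s1 (4 * M) (tau j) hs10
     ltac:(by rewrite mulr_ge0) hTlip
     ltac:(by rewrite T0 tau_gt0)
     ltac:(apply: ltW; apply: le_lt_trans hj0; apply: tau_decr_le; exact: ltnW).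
  by exists s.
have [sj hsj] := choice hex.
have hmono : forall j, (n0 <= j)%N -> sj j.+1 <= sj j.
  move=> j hj; have [h1 h2 h3] := hsj j hj.
  have [h1' h2' h3'] := hsj j.+1 (leqW hj).
  rewrite leNgt; apply/negP => hlt.
  have := h3' (sj j); rewrite hlt; move: h1 => /andP [-> _] => /(_ isT).
  by rewrite h2 => h; have := lt_trans h (tau_decr R j); rewrite ltxx.
apply: (@core R sj (fun j => E (sj j)) n0 M ((2 * (1 + pi))^-1)) => //.
- by rewrite invr_gt0 mulr_gt0 //; have := pi_gt0 R; lra.
- move=> j hj; have [h1 _ _] := hsj j hj; exact: hs1' _ h1.
- move=> j hj; have [h1 _ _] := hsj j hj; have [h1' _ _] := hsj j.+1 (leqW hj).
  by rewrite -(ger0_norm (x := sj j - sj j.+1)) ?subr_ge0 ?hmono //; apply: hElip.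
- move=> j hj; have [h1 h2 _] := hsj j hj; have [h1' h2' _] := hsj j.+1 (leqW hj).
  have [e1 _ _] := hnear _ h1; have [e1' _ _] := hnear _ h1'.
  by rewrite e1 e1' h2 h2'; apply: gap.
Qed.
Lemma unit_vec (R : realType) (m : nat) (i : 'I_m) :
  enorm (\row_(j < m) ((j == i)%:R : R)) = 1.
Proof.
rewrite /enorm (bigD1 i) //= big1 ?addr0 ?mxE ?eqxx ?expr1n ?sqrtr1 //.
by move=> j hj; rewrite mxE (negbTE hj) expr0n.
Qed.

Theorem lemma3p3 (R : realType) (n k : nat) (p : 'rV[R]_n.+1) (a : R -> R)
  (f : 'rV[R]_k.+1 -> 'rV[R]_n.+1) :
  (2 <= n)%N ->
  (@unit_sphere R n.+1) p ->
  {within `[0%R, +oo[, continuous a} ->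
  smooth_pos a ->
  a 0 = 0 ->
  (forall t : R, 0 < t <= 1 ->
     a t = sin (ln (ln (expR 1 / t))) / (1 + ln (ln (expR 1 / t)))) ->
  (forall t : R, 3 / 2 <= t -> a t = 0) ->
  (1 <= k)%N ->
  (forall x, (@unit_sphere R k.+1) x ->
     exists2 y, (@unit_sphere R n.+1) y & f x = phi_map a p y) ->
  euclid_lipschitz_on ((@unit_sphere R k.+1)) f ->
  (forall x, (@unit_sphere R k.+1) x -> f x = p) \/
  (forall x, (@unit_sphere R k.+1) x -> f x != p).
Proof.
move=> hn hp _ _ ha0 ha ha32 hk hf [L hL].
have hp' : enorm p = 1 := hp.
have hf' : forall x, enorm x = 1 -> exists2 y, enorm y = 1 & f x = phi_map a p y.
  by move=> x hx; have [y hy e] := hf x hx; exists y.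
have hL' : forall x y, enorm x = 1 -> enorm y = 1 ->
    enorm (f x - f y) <= L * enorm (x - y) by move=> x y hx hy; apply: hL.
have key := @pathB R n.+1 k.+1 p a f hp' ha0 ha ha32 hf' L hL'.
case: (pselect (exists x0, enorm x0 = 1 /\ f x0 = p)) => [[x0 [hx0 fx0]] | nex]; last first.
  by right => x hx; apply/eqP => hfx; apply: nex; exists x; split.
case: (pselect (exists x1, enorm x1 = 1 /\ f x1 != p)) => [[x1 [hx1 fx1]] | nex1]; last first.
  left => x hx; apply/eqP; apply/negPn/negP => h; apply: nex1; exists x; split => //.
exfalso.
case: (eqVneq (x0 + x1) 0) => hsum; last exact: (key x0 x1).
have ex1 : x1 = - x0 by apply/eqP; rewrite -addr_eq0 addrC hsum.
have [z [hz hz1 hz2]] : exists z : 'rV[R]_k.+1, [/\ enorm z = 1, z + x0 != 0 & z - x0 != 0].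
  pose e (i : 'I_k.+1) := \row_(j < k.+1) ((j == i)%:R : R).
  have i1lt : (1 < k.+1)%N by [].
  pose i1 := Ordinal i1lt.
  case: (pselect ((e ord0 + x0 != 0) && (e ord0 - x0 != 0))) => [/andP [h1 h2] | nb0].
    by exists (e ord0); split => //; apply: unit_vec.
  case: (pselect ((e i1 + x0 != 0) && (e i1 - x0 != 0))) => [/andP [h1 h2] | nb1].
    by exists (e i1); split => //; apply: unit_vec.
  exfalso.
  have pm : forall z : 'rV[R]_k.+1, ~ ((z + x0 != 0) && (z - x0 != 0)) ->
      z ord0 ord0 = - x0 ord0 ord0 \/ z ord0 ord0 = x0 ord0 ord0.
    move=> z hz; case: (eqVneq (z + x0) 0) => h1.
      by left; move/eqP: h1; rewrite addr_eq0 => /eqP ->; rewrite mxE.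
    case: (eqVneq (z - x0) 0) => h2; last by exfalso; apply: hz; rewrite h1 h2.
    by right; move/eqP: h2; rewrite subr_eq0 => /eqP ->.
  have e00 : e ord0 ord0 ord0 = 1 by rewrite mxE eqxx.
  have e10 : e i1 ord0 ord0 = 0 by rewrite mxE.
  have := pm _ nb0; have := pm _ nb1; rewrite e00 e10.
  by move=> [h|h] [h'|h']; move: h'; rewrite -?h; move: h; lra.
case: (eqVneq (f z) p) => hfz.
  apply: (key z x1 hz hx1) => //; by rewrite ex1.
by apply: (key x0 z hx0 hz) => //; rewrite addrC.
Qed.
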